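(* Let $\varphi$ be an LTL formula over $2^{V_i}$ and let $\mathcal{A}_\varphi$ be an ACA with $\mathcal{L}(\mathcal{A}_\varphi)=\mathcal{L}(\varphi)$. Let $s$ be a strategy for process $p_i$. If $s$ is delay-dominant for $\mathcal{A}_\varphi$, then $s$ is remorsefree dominant for $\varphi$.
   Context: Automata. For a finite set $\Sigma$ of atomic propositions, an alternating co-Büchi automaton (ACA) over $2^\Sigma$ is a tuple $\mathcal{A}=(Q,q_0,\delta,F)$ with a finite set of states $Q$, initial state $q_0\in Q$, set of rejecting states $F\subseteq Q$, and transition function $\delta:Q\times 2^\Sigma\to\mathbb{B}^+(Q)$ into positive Boolean formulas over $Q$ given in disjunctive normal form; $\delta(q,a)$ is identified with the set of its disjuncts, each disjunct $c\in\delta(q,a)$ being a set of states. A run tree of $\mathcal{A}$ on $\sigma=\sigma_0\sigma_1\cdots\in(2^\Sigma)^\omega$ is a $Q$-labeled tree $(T,\ell)$ ($T\subseteq\mathbb{N}^*$ prefix-closed) with $\ell(\varepsilon)=q_0$ and $\{\ell(x')\mid x'\text{ a child of }x\}\in\delta(\ell(x),\sigma_{|x|})$ for every node $x$; it is accepting if every infinite branch visits $F$ only finitely often. $\mathcal{A}$ accepts $\sigma$ if some run tree on $\sigma$ is accepting; $\mathcal{L}(\mathcal{A})$ is the set of accepted words. For an LTL formula $\varphi$, $\mathcal{L}(\varphi)$ is the set of infinite words satisfying $\varphi$. (As implicit in the game below, each $\delta(q,a)$ and each of its disjuncts is nonempty.) Processes and strategies. A process $p_i$ has disjoint finite sets $I_i$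 of input and $O_i$ of output variables; $V_i=I_i\cup O_i$. A strategy for $p_i$ is a function $s:(2^{I_i})^*\to 2^{O_i}$ representable by a finite Moore machine. For $\gamma\in(2^{I_i})^\omega$ the computation $\mathrm{comp}(s,\gamma)\in(2^{V_i})^\omega$ is given by $\mathrm{comp}(s,\gamma)_j=\gamma_j\cup s(\gamma_0\cdots\gamma_{j-1})$ for all $j\ge 0$. Delay-dominance game. Let $\mathcal{A}=(Q,q_0,\delta,F)$ be an ACA and $\sigma,\sigma'$ infinite words over its alphabet. The game $(\mathcal{A},\sigma,\sigma')$ is played between Duplicator (Player 0) and Spoiler (Player 1) on positions of the forms $((p,q),j)$ and $((p,q,c,c'),j)$ (owned by Spoiler) and $((p,q,c),j)$ and $((p,q,c,q'),j)$ (owned by Duplicator), with $p,q,q'\in Q$, $c,c'\subseteq Q$, $j\in\mathbb{N}$. Moves: from $((p,q),j)$ to $((p,q,c),j)$ with $c\in\delta(p,\sigma_j)$; from $((p,q,c),j)$ to $((p,q,c,c'),j)$ with $c'\in\delta(q,\sigma'_j)$; from $((p,q,c,c'),j)$ to $((p,q,c,q'),j)$ with $q'\in c'$; from $((p,q,c,q'),j)$ to $((p',q'),j+1)$ with $p'\in c$. The initial position is $((q_0,q_0),0)$. For a position whose state tuple is $(p,q)$, $(p,q,c)$, $(p,q,c,c')$ or $(p,q,c,q')$, its alternative state is $p$ and its dominant state is $q$. A play $\rho_0\rho_1\cdots$ is won by Duplicator iff for every $k$ such that the dominant state of $\rho_k$ lies in $F$ there is $k'\ge k$ such that the alternative state of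 $\rho_{k'}$ lies in $F$. A strategy of a player maps finite play prefixes ending in one of its positions to a legal successor; a Duplicator strategy is winning if every play from the initial position consistent with it is won by Duplicator. Delay-dominance. For strategies $s,t$ of $p_i$, an ACA $\mathcal{A}$ over $2^{V_i}$ and $\gamma\in(2^{I_i})^\omega$: $s$ delay-dominates $t$ on $\gamma$ if Duplicator has a winning strategy in $(\mathcal{A},\mathrm{comp}(t,\gamma),\mathrm{comp}(s,\gamma))$; $s$ delay-dominates $t$ if this holds for all $\gamma$; $s$ is delay-dominant for $\mathcal{A}$ (and $p_i$) if it delay-dominates every strategy $t$ for $p_i$. Remorsefree dominance. A strategy $s$ for $p_i$ is winning for $\varphi$ if $\mathrm{comp}(s,\gamma)\models\varphi$ for all $\gamma\in(2^{I_i})^\omega$; $s$ is remorsefree dominant for $\varphi$ if for every strategy $t$ for $p_i$ and every $\gamma\in(2^{I_i})^\omega$, $\mathrm{comp}(t,\gamma)\models\varphi$ implies $\mathrm{comp}(s,\gamma)\models\varphi$. *)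

(* Defs.v *)
From mathcomp Require Import all_boot.
Set Implicit Arguments. Unset Strict Implicit. Unset Printing Implicit Defensive.

Definition word (V : finType) := nat -> {set V}.

Inductive ltl (V : finType) : Type :=
| LTrue : ltl V
| LAtom : V -> ltl V
| LNot : ltl V -> ltl V
| LAnd : ltl V -> ltl V -> ltl V
| LNext : ltl V -> ltl V
| LUntil : ltl V -> ltl V -> ltl V.

Fixpoint ltl_holds (V : finType) (sigma : word V) (i : nat) (phi : ltl V) : Prop :=
  match phi with
  | LTrue => True
  | LAtom a => a \in sigma i
  | LNot f => ~ ltl_holds sigma i f
  | LAnd f g => ltl_holds sigma i f /\ ltl_holds sigma i g
  | LNext f => ltl_holds sigma i.+1 f
  | LUntil f g => exists k, i <= k /\ ltl_holds sigma k g /\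
                    (forall m, i <= m -> m < k -> ltl_holds sigma m f)
  end.

Definition ltl_sat (V : finType) (sigma : word V) (phi : ltl V) : Prop :=
  ltl_holds sigma 0 phi.

(* delta q a is the set of disjuncts (each a set of states) of the DNF formula. *)
Record aca (V : finType) := ACA {
  aca_state : finType;
  aca_init : aca_state;
  aca_delta : aca_state -> {set V} -> {set {set aca_state}};
  aca_rej : {set aca_state}
}.
Arguments aca_state {V} a.
Arguments aca_init {V} a.
Arguments aca_delta {V} a _ _.
Arguments aca_rej {V} a.

Unset Implicit Arguments.
Arguments ltl_holds {V} sigma i phi.
Arguments ltl_sat {V} sigma phi.

Definition aca_wf {V : finType} (A : aca V) : Prop :=
  forall q a, aca_delta A q a != set0 /\
              (forall c, c \in aca_delta A q a -> c != set0).

Definition run_tree {V : finType} (A : aca V) (sigma : word V)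
    (T : seq nat -> Prop) (l : seq nat -> aca_state A) : Prop :=
  T [::] /\
  (forall x n, T (rcons x n) -> T x) /\
  l [::] = aca_init A /\
  (forall x, T x ->
     exists2 c, c \in aca_delta A (l x) (sigma (size x)) &
       forall q, q \in c <-> exists n, T (rcons x n) /\ l (rcons x n) = q).

Definition branch (T : seq nat -> Prop) (b : nat -> seq nat) : Prop :=
  b 0 = [::] /\ forall k, T (b k) /\ exists n, b k.+1 = rcons (b k) n.

Definition accepting_run {V : finType} (A : aca V)
    (T : seq nat -> Prop) (l : seq nat -> aca_state A) : Prop :=
  forall b, branch T b -> exists N, forall k, N <= k -> l (b k) \notin aca_rej A.

Definition aca_accepts {V : finType} (A : aca V) (sigma : word V) : Prop :=
  exists T l, run_tree A sigma T l /\ accepting_run A T l.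

(* A strategy is a function (2^{I})^* -> 2^{O}, representable by a finite Moore
   machine; we represent it by a function on seq {set V} and only constrain it
   on sequences of input letters (subsets of I). *)
Definition is_strategy {V : finType} (I O : {set V}) (s : seq {set V} -> {set V}) : Prop :=
  (forall w, all (fun a : {set V} => a \subset I) w -> s w \subset O) /\
  exists (M : finType) (m0 : M) (md : M -> {set V} -> M) (mo : M -> {set V}),
    forall w, all (fun a : {set V} => a \subset I) w -> s w = mo (foldl md m0 w).

Definition input_word {V : finType} (I : {set V}) (gamma : word V) : Prop :=
  forall j, gamma j \subset I.

Definition comp {V : finType} (s : seq {set V} -> {set V}) (gamma : word V) : word V :=
  fun j => gamma j :|: s [seq gamma k | k <- iota 0 j].

Set Implicit Arguments.
Inductive gpos (Q : finType) : Type :=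
| PosS1 : Q -> Q -> nat -> gpos Q
| PosD1 : Q -> Q -> {set Q} -> nat -> gpos Q
| PosS2 : Q -> Q -> {set Q} -> {set Q} -> nat -> gpos Q
| PosD2 : Q -> Q -> {set Q} -> Q -> nat -> gpos Q.

Unset Implicit Arguments.
Definition dup_owned {Q : finType} (x : gpos Q) : bool :=
  match x with PosD1 _ _ _ _ | PosD2 _ _ _ _ _ => true | _ => false end.

Definition alt_state {Q : finType} (x : gpos Q) : Q :=
  match x with
  | PosS1 p _ _ | PosD1 p _ _ _ | PosS2 p _ _ _ _ | PosD2 p _ _ _ _ => p end.

Definition dom_state {Q : finType} (x : gpos Q) : Q :=
  match x with
  | PosS1 _ q _ | PosD1 _ q _ _ | PosS2 _ q _ _ _ | PosD2 _ q _ _ _ => q end.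

Definition gmove {V : finType} (A : aca V) (sigma sigma' : word V)
    (x y : gpos (aca_state A)) : Prop :=
  match x, y with
  | PosS1 p q j, PosD1 p1 q1 c j1 =>
      [/\ p1 = p, q1 = q, j1 = j & c \in aca_delta A p (sigma j)]
  | PosD1 p q c j, PosS2 p1 q1 c1 c' j1 =>
      [/\ p1 = p, q1 = q, c1 = c, j1 = j & c' \in aca_delta A q (sigma' j)]
  | PosS2 p q c c' j, PosD2 p1 q1 c1 q' j1 =>
      [/\ p1 = p, q1 = q, c1 = c, j1 = j & q' \in c']
  | PosD2 p q c q' j, PosS1 p' q1 j1 =>
      [/\ q1 = q', j1 = j.+1 & p' \in c]
  | _, _ => False
  end.

Definition ginit {V : finType} (A : aca V) : gpos (aca_state A) :=
  PosS1 (aca_init A) (aca_init A) 0.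

Definition is_play {V : finType} (A : aca V) (sigma sigma' : word V)
    (rho : nat -> gpos (aca_state A)) : Prop :=
  rho 0 = ginit A /\ forall k, gmove A sigma sigma' (rho k) (rho k.+1).

Definition is_play_prefix {V : finType} (A : aca V) (sigma sigma' : word V)
    (h : seq (gpos (aca_state A))) : Prop :=
  0 < size h /\ nth (ginit A) h 0 = ginit A /\
  forall i, i.+1 < size h ->
    gmove A sigma sigma' (nth (ginit A) h i) (nth (ginit A) h i.+1).

Definition prefix_of {T : Type} (rho : nat -> T) (k : nat) : seq T :=
  [seq rho i | i <- iota 0 k.+1].

Definition dup_strategy {V : finType} (A : aca V) (sigma sigma' : word V)
    (f : seq (gpos (aca_state A)) -> gpos (aca_state A)) : Prop :=
  forall h, is_play_prefix A sigma sigma' h ->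
    dup_owned (last (ginit A) h) ->
    gmove A sigma sigma' (last (ginit A) h) (f h).

Definition consistent_with {V : finType} (A : aca V)
    (f : seq (gpos (aca_state A)) -> gpos (aca_state A))
    (rho : nat -> gpos (aca_state A)) : Prop :=
  forall k, dup_owned (rho k) -> rho k.+1 = f (prefix_of rho k).

Definition dup_wins_play {V : finType} (A : aca V) (rho : nat -> gpos (aca_state A)) : Prop :=
  forall k, dom_state (rho k) \in aca_rej A ->
    exists2 k', k <= k' & alt_state (rho k') \in aca_rej A.

Definition dup_winning {V : finType} (A : aca V) (sigma sigma' : word V)
    (f : seq (gpos (aca_state A)) -> gpos (aca_state A)) : Prop :=
  dup_strategy A sigma sigma' f /\
  forall rho, is_play A sigma sigma' rho -> consistent_with A f rho ->
    dup_wins_play A rho.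

Definition dup_wins_game {V : finType} (A : aca V) (sigma sigma' : word V) : Prop :=
  exists f, dup_winning A sigma sigma' f.

Definition delay_dominates_on {V : finType} (A : aca V) (s t : seq {set V} -> {set V})
    (gamma : word V) : Prop :=
  dup_wins_game A (comp t gamma) (comp s gamma).

Definition delay_dominates {V : finType} (I : {set V}) (A : aca V)
    (s t : seq {set V} -> {set V}) : Prop :=
  forall gamma, input_word I gamma -> delay_dominates_on A s t gamma.

Definition delay_dominant {V : finType} (I O : {set V}) (A : aca V)
    (s : seq {set V} -> {set V}) : Prop :=
  forall t, is_strategy I O t -> delay_dominates I A s t.

Definition remorsefree_dominant {V : finType} (I O : {set V}) (phi : ltl V)
    (s : seq {set V} -> {set V}) : Prop :=
  forall t, is_strategy I O t ->
    forall gamma, input_word I gamma ->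
      ltl_sat (comp t gamma) phi -> ltl_sat (comp s gamma) phi.

(* Main.v *)
Require Import Defs.
From mathcomp Require Import all_boot.
From Stdlib Require Import ClassicalEpsilon.
From mathcomp Require Import zify.
Set Implicit Arguments. Unset Strict Implicit.

Lemma nth_catR (X : Type) (x0 : X) s1 s2 n r : size s1 = n -> nth x0 (s1 ++ s2) (n + r) = nth x0 s2 r.
Proof. by move=> <-; rewrite nth_cat ltnNge leq_addr /= addKn. Qed.

Lemma take_catR (X : Type) (s1 s2 : seq X) n r : size s1 = n -> take (n + r) (s1 ++ s2) = s1 ++ take r s2.
Proof. by move=> <-; rewrite take_cat ltnNge leq_addr /= addKn. Qed.

Section Sim.
Variables (V : finType) (A : aca V) (sigma sigma' : word V).
Local Notation Q := (aca_state A).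
Local Notation G := (gpos (aca_state A)).
Local Notation g := (ginit A).
Variables (T : seq nat -> Prop) (l : seq nat -> aca_state A).
Hypothesis hrun : run_tree A sigma T l.
Variable f : seq G -> G.
Hypothesis hf : dup_winning A sigma sigma' f.

Definition childP y (c : {set Q}) := c \in aca_delta A (l y) (sigma (size y)) /\
  forall q, q \in c <-> exists n, T (rcons y n) /\ l (rcons y n) = q.
Definition Cold y := epsilon (inhabits set0) (childP y).
Definition Nold y p := epsilon (inhabits 0) (fun n => T (rcons y n) /\ l (rcons y n) = p).

Definition s2c (x : G) : {set Q} := match x with PosS2 _ _ _ c' _ => c' | _ => set0 end.

Definition step (hy : seq G * seq nat) (n : nat) : option (seq G * seq nat) :=
  let h := hy.1 in let y := hy.2 in
  let p := alt_state (last g h) in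
  let q := dom_state (last g h) in
  let j := size y in
  let d1 := PosD1 p q (Cold y) j in
  let s2 := f (h ++ [:: d1]) in
  let c' := s2c s2 in
  if n < #|c'| then
    let d2 := PosD2 p q (Cold y) (nth q (enum c') n) j in
    let s1 := f (h ++ [:: d1; s2; d2]) in
    Some (h ++ [:: d1; s2; d2; s1], rcons y (Nold y (alt_state s1)))
  else None.

Definition st (x : seq nat) :=
  foldl (fun o n => obind (fun hy => step hy n) o) (Some ([:: g], [::])) x.

Lemma st_rcons x n : st (rcons x n) = obind (fun hy => step hy n) (st x).
Proof. by rewrite /st foldl_rcons. Qed.

Definition Inv (hy : seq G * seq nat) :=
  is_play_prefix A sigma sigma' hy.1 /\ T hy.2 /\ size hy.1 = (size hy.2 * 4).+1 /\
  exists q, last g hy.1 = PosS1 (l hy.2) q (size hy.2).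

Lemma pp_cat1 h d : is_play_prefix A sigma sigma' h -> gmove A sigma sigma' (last g h) d ->
  is_play_prefix A sigma sigma' (h ++ [:: d]).
Proof.
case=> [sz [h0 hm]] mv; split; first by rewrite size_cat addn1.
split; first by rewrite nth_cat sz.
move=> i; rewrite size_cat addn1 ltnS => hi.
rewrite !nth_cat.
case: (ltnP i.+1 (size h)) => hi2.
  by rewrite (ltnW hi2); apply: hm.
have ei : i.+1 = size h by apply/eqP; rewrite eqn_leq hi hi2.
rewrite -ei ltnSn subnn /=.
by move: mv; rewrite -(nth_last g) -ei.
Qed.

Lemma childP_ex y : T y -> exists c, childP y c.
Proof.
case: hrun => _ [_ [_ h4]] Ty; case: (h4 y Ty) => c hc1 hc2; exists c; by split.
Qed.

Lemma step_spec h y : Inv (h, y) ->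
  exists q c', [/\ last g h = PosS1 (l y) q (size y),
    f (h ++ [:: PosD1 (l y) q (Cold y) (size y)]) = PosS2 (l y) q (Cold y) c' (size y),
    c' \in aca_delta A q (sigma' (size y)) &
    forall n, if n < #|c'| then
      exists p', let q' := nth q (enum c') n in
        let d1 := PosD1 (l y) q (Cold y) (size y) in
        let s2 := PosS2 (l y) q (Cold y) c' (size y) in
        let d2 := PosD2 (l y) q (Cold y) q' (size y) in
        let s1 := PosS1 p' q' (size y).+1 in
        [/\ step (h, y) n = Some (h ++ [:: d1; s2; d2; s1], rcons y (Nold y p')),
            f (h ++ [:: d1; s2; d2]) = s1, q' \in c' &
            Inv (h ++ [:: d1; s2; d2; s1], rcons y (Nold y p'))]
    else step (h, y) n = None].
Proof.
case=> /= [pp [Ty [sz [q hl]]]].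
have [c hc] := childP_ex Ty.
have hC : childP y (Cold y) by apply: epsilon_spec; exists c.
case: (hC) => hCd hCc.
set d1 := PosD1 (l y) q (Cold y) (size y).
have pp1 : is_play_prefix A sigma sigma' (h ++ [:: d1]).
  by apply: pp_cat1 => //; rewrite hl /= /d1.
have := hf.1 _ pp1; rewrite last_cat /= => /(_ isT).
case E : (f (h ++ [:: d1])) => [||p1 q1 c1 c' j1|] //=.
case=> e1 e2 e3 e4 hc'; subst p1 q1 c1 j1.
exists q, c'; split => // n.
rewrite /step /= hl /= E /=.
case hn : (n < #|c'|) => //.
set q' := nth q (enum c') n.
have hq' : q' \in c'.
  by rewrite -mem_enum /q' mem_nth // -cardE.
set s2 := PosS2 (l y) q (Cold y) c' (size y).
set d2 := PosD2 (l y) q (Cold y) q' (size y).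
have pp2 : is_play_prefix A sigma sigma' (h ++ [:: d1; s2]).
  have := pp_cat1 (d:=s2) pp1; rewrite -catA /=; apply.
  by rewrite last_cat /=.
have pp3 : is_play_prefix A sigma sigma' (h ++ [:: d1; s2; d2]).
  have := pp_cat1 (d:=d2) pp2; rewrite -catA /=; apply.
  by rewrite last_cat /=.
have := hf.1 _ pp3; rewrite last_cat /= => /(_ isT).
case E2 : (f (h ++ [:: d1; s2; d2])) => [p' q2 j2|||] //=.
case=> e1 e2 hp'; subst q2 j2.
exists p'.
have hN : T (rcons y (Nold y p')) /\ l (rcons y (Nold y p')) = p'.
  by apply: (epsilon_spec (inhabits 0) (fun n => T (rcons y n) /\ l (rcons y n) = p')); apply/hCc.
split => //.
split => /=.
  have := pp_cat1 (d:=PosS1 p' q' (size y).+1) pp3; rewrite -catA /=; apply.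
  by rewrite last_cat /=.
split; first by case: hN.
split; first by rewrite size_cat sz size_rcons /=; lia.
exists q'; by rewrite last_cat /= size_rcons hN.2.
Qed.

Definition T' x := st x <> None.
Definition dflt : seq G * seq nat := ([:: g], [::]).
Definition l' x := dom_state (last g (odflt dflt (st x)).1).

Lemma st_inv x hy : st x = Some hy -> Inv hy /\ size hy.2 = size x.
Proof.
elim/last_ind: x hy => [|x n IH] hy.
  case=> <-; split => //; split.
    by split => //; split => // i.
  split; first by case: hrun.
  split => //; exists (aca_init A); by case: hrun => _ [_ [-> _]].
rewrite st_rcons; case E: (st x) => [[h y]|] //= H.
have [Ih sy] := IH _ E.
have [q [c' [_ _ _ hn]]] := step_spec Ih.
have := hn n; case: (n < #|c'|); last by rewrite H.
case=> p' [hs _ _ hI]; rewrite hs in H; case: H => <-; split => //.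
by rewrite /= !size_rcons -sy.
Qed.

Lemma run_ok : run_tree A sigma' T' l'.
Proof.
split; first by [].
split; first by move=> x n; rewrite /T' st_rcons; case: (st x).
split; first by [].
move=> x; rewrite /T'; case E: (st x) => [[h y]|] // _.
have [Ih sy] := st_inv E; simpl in sy.
have [q [c' [hl _ hc' hn]]] := step_spec Ih.
exists c'; first by rewrite /l' E /= hl /= -sy.
move=> q'; split.
- move=> hq'; exists (index q' (enum c')).
  have hi : index q' (enum c') < #|c'| by rewrite cardE index_mem mem_enum.
  have := hn (index q' (enum c')); rewrite hi; case=> p' [hs _ _ _].
  rewrite /l' st_rcons E /= hs /=; split => //.
  by rewrite last_cat /= nth_index // mem_enum.
- case=> n []; rewrite /l' st_rcons E /=.
  have := hn n; case: (n < #|c'|) => [[p' [hs _ hq _]]|->] //.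
  by rewrite hs => _ /=; rewrite last_cat /= => <-.
Qed.


Lemma acc_ok : accepting_run A T l -> accepting_run A T' l'.
Proof.
move=> hacc b' [b0 hb].
pose HY k := odflt dflt (st (b' k)).
have hst k : st (b' k) = Some (HY k).
  by rewrite /HY; have := (hb k).1; rewrite /T'; case: (st (b' k)).
have hinv k : Inv (HY k) := (st_inv (hst k)).1.
have R k : exists q c' q' p',
   [/\ last g (HY k).1 = PosS1 (l (HY k).2) q (size (HY k).2),
       f ((HY k).1 ++ [:: PosD1 (l (HY k).2) q (Cold (HY k).2) (size (HY k).2)])
         = PosS2 (l (HY k).2) q (Cold (HY k).2) c' (size (HY k).2),
       f ((HY k).1 ++ [:: PosD1 (l (HY k).2) q (Cold (HY k).2) (size (HY k).2);
                          PosS2 (l (HY k).2) q (Cold (HY k).2) c' (size (HY k).2);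
                          PosD2 (l (HY k).2) q (Cold (HY k).2) q' (size (HY k).2)])
         = PosS1 p' q' (size (HY k).2).+1 &
       HY k.+1 = ((HY k).1 ++ [:: PosD1 (l (HY k).2) q (Cold (HY k).2) (size (HY k).2);
                          PosS2 (l (HY k).2) q (Cold (HY k).2) c' (size (HY k).2);
                          PosD2 (l (HY k).2) q (Cold (HY k).2) q' (size (HY k).2);
                          PosS1 p' q' (size (HY k).2).+1],
                  rcons (HY k).2 (Nold (HY k).2 p'))].
  case: (hb k) => _ [n en].
  have := hst k.+1; rewrite en st_rcons hst /=.
  case: (HY k) (hinv k) => h y Ih /=.
  have [q [c' [hl hf2 _ hn]]] := step_spec Ih.
  have := hn n; case: (n < #|c'|) => [[p' [hs hf3 _ _]]|->] //.
  rewrite hs => [[<-]]; exists q, c', (nth q (enum c') n), p'; by split.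
have hsz k : size (b' k) = k.
  elim: k => [|k IH]; first by rewrite b0.
  by case: (hb k) => _ [n ->]; rewrite size_rcons IH.
have sizeH k : size (HY k).1 = (k * 4).+1.
  by case: (hinv k) => _ [_ [-> _]]; rewrite (st_inv (hst k)).2 hsz.
have Hpre k m : k <= m -> exists s, (HY m).1 = (HY k).1 ++ s.
  elim: m => [|m IH].
    by rewrite leqn0 => /eqP ->; exists [::]; rewrite cats0.
  rewrite leq_eqVlt => /orP [/eqP ->|hkm]; first by exists [::]; rewrite cats0.
  have [s es] := IH hkm.
  have [q [c' [q' [p' [_ _ _ ->]]]]] := R m.
  by rewrite /= es -catA; eexists.
pose rho i := nth g (HY i).1 i.
have rhoE i k : i < (k*4).+1 -> rho i = nth g (HY k).1 i.
  move=> hi; rewrite /rho.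
  have [s1 e1] := Hpre i (maxn i k) (leq_maxl _ _).
  have [s2 e2] := Hpre k (maxn i k) (leq_maxr _ _).
  have h1 : nth g (HY (maxn i k)).1 i = nth g (HY i).1 i.
    by rewrite e1 nth_cat sizeH ifT //; lia.
  have h2 : nth g (HY (maxn i k)).1 i = nth g (HY k).1 i.
    by rewrite e2 nth_cat sizeH ifT.
  by rewrite -h1 h2.
have pref i k : i < (k*4).+1 -> prefix_of rho i = take i.+1 (HY k).1.
  move=> hi; rewrite /prefix_of.
  transitivity [seq nth g (HY k).1 j | j <- iota 0 i.+1].
    by apply/eq_in_map => j; rewrite mem_iota => /andP [_ hj]; apply: rhoE; lia.
  by apply: map_nth_iota0; rewrite sizeH.
have rho_last k : rho (k*4) = last g (HY k).1.
  by rewrite (rhoE _ k) // -(nth_last g) sizeH.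
have rhoL k r : r < 4 -> rho ((k*4).+1 + r) = nth g (drop (k*4).+1 (HY k.+1).1) r.
  move=> hr; rewrite (rhoE _ k.+1); last by lia.
  have [s es] := Hpre k k.+1 (leqnSn k).
  by rewrite es drop_cat sizeH ltnn subnn drop0 nth_catR // sizeH.
have prefL k r : r < 4 -> prefix_of rho ((k*4).+1 + r) = (HY k).1 ++ take r.+1 (drop (k*4).+1 (HY k.+1).1).
  move=> hr; rewrite (pref _ k.+1); last by lia.
  have [s es] := Hpre k k.+1 (leqnSn k).
  by rewrite es drop_cat sizeH ltnn subnn drop0 -addnS take_catR // sizeH.
have Hall k r : r < 4 ->
   (dup_owned (rho (k*4 + r)) -> rho (k*4 + r).+1 = f (prefix_of rho (k*4 + r))) /\
   alt_state (rho (k*4 + r)) = l (HY k).2.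
  move=> hr; have [q [c' [q' [p' [hl hf2 hf3 he]]]]] := R k.
  have hD : drop (k*4).+1 (HY k.+1).1 =
    [:: PosD1 (l (HY k).2) q (Cold (HY k).2) (size (HY k).2);
        PosS2 (l (HY k).2) q (Cold (HY k).2) c' (size (HY k).2);
        PosD2 (l (HY k).2) q (Cold (HY k).2) q' (size (HY k).2);
        PosS1 p' q' (size (HY k).2).+1].
    by rewrite he /= drop_cat sizeH ltnn subnn drop0.
  case: r hr => [|[|[|[|r]]]] // _.
  - by rewrite addn0 rho_last hl.
  - have -> : k*4 + 1 = (k*4).+1 + 0 by lia.
    have -> : ((k*4).+1 + 0).+1 = (k*4).+1 + 1 by lia.
    rewrite !rhoL // prefL // hD /=.
    by split => // _; rewrite hf2.
  - have -> : k*4 + 2 = (k*4).+1 + 1 by lia.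
    by rewrite !rhoL // hD.
  - have -> : k*4 + 3 = (k*4).+1 + 2 by lia.
    have -> : ((k*4).+1 + 2).+1 = (k*4).+1 + 3 by lia.
    rewrite !rhoL // prefL // hD /=.
    by split => // _; rewrite hf3.
have isp : is_play A sigma sigma' rho.
  split; first by rewrite /rho; case: (hinv 0) => [[_ [h0 _]] _].
  move=> i; rewrite (rhoE i i.+1); last by lia.
  rewrite (rhoE i.+1 i.+1); last by lia.
  case: (hinv i.+1) => [[_ [_ hm]] _]; apply: hm; rewrite sizeH; lia.
have cons : consistent_with A f rho.
  move=> i; rewrite (divn_eq i 4); exact: (Hall _ _ (ltn_pmod i (isT : 0 < 4))).1.
have hw := hf.2 rho isp cons.
have br : branch T (fun k => (HY k).2).
  split; first by move: (hst 0); rewrite b0 => -[<-].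
  move=> k; split; first by case: (hinv k) => _ [].
  by have [q [c' [q' [p' [_ _ _ ->]]]]] := R k; eexists.
have [N hN] := hacc _ br.
exists N => k hk; apply/negP => hrej.
have : dom_state (rho (k*4)) \in aca_rej A by rewrite rho_last; move: hrej; rewrite /l' hst.
move/hw => [k' hk' hk'r].
move: hk'r; rewrite (divn_eq k' 4) (Hall _ _ (ltn_pmod k' (isT : 0 < 4))).2.
apply/negP; apply: hN; apply: leq_trans hk _.
by have := leq_div2r 4 hk'; rewrite mulnK.
Qed.
End Sim.

Lemma sim_accepts (V : finType) (A : aca V) (sigma sigma' : word V) :
  dup_wins_game A sigma sigma' -> aca_accepts A sigma -> aca_accepts A sigma'.
Proof.
move=> [f hf] [T [l [hr ha]]].
eexists; eexists; split.
  exact: (run_ok hr hf).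
exact: (acc_ok hr hf ha).
Qed.

Theorem theorem5 (V : finType) (I O : {set V})
  (hdisj : [disjoint I & O]) (hcov : I :|: O = [set: V])
  (phi : ltl V) (A : aca V) (hwf : aca_wf A)
  (hlang : forall sigma : word V, aca_accepts A sigma <-> ltl_sat sigma phi)
  (s : seq {set V} -> {set V}) (hs : is_strategy I O s) :
  delay_dominant I O A s -> remorsefree_dominant I O phi s.
Proof.
move=> hdd t ht gamma hg hsat.
apply/hlang; apply: (sim_accepts (hdd t ht gamma hg)); exact/hlang.
Qed.
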